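(* Let $1<w\le 2$, $h>1$, $k\ge 2$, and let $\frac12\le y_1<\dots<y_n\le h-\frac12$ be uniformly spaced with $y_{i+1}-y_i=\frac1k$ for all $i$. Let $(\mathbf x,\prec)$ be a $\frac1k$-reasonable layout of this instance. If $1<i<n$ and both $s_{i-1}$ and $s_{i+1}$ are in front of $s_i$, then $s_i$ is a standard bad square.
   Context: The instance is the strip $T=[0,w]\times[0,h]$ with the given $y_i$. A layout is a pair $(\mathbf x,\prec)$ where $\mathbf x=(x_1,\dots,x_n)$ with $x_i\in[\frac12,w-\frac12]$, and $\prec$ is a total order on the squares $s_1,\dots,s_n$, where $s_i$ is the closed axis-parallel unit square with centre $(x_i,y_i)$. If $s_i\prec s_j$ we say $s_j$ is in front of $s_i$ and $s_i$ is behind $s_j$. A point $p$ on the boundary of $s_i$ is visible if every square $s_j$ ($j\neq i$) containing $p$ is behind $s_i$, and covered otherwise. The visible perimeter of $s_i$ is the total length of its visible boundary points; the gap of $s_i$ is its visible perimeter minus $2$, the gap of a layout is the minimum gap of its squares, and a layout is $\varepsilon$-reasonable if its gap is larger than $\varepsilon$. A bad square is a square with at least two of its four corners covered; a standard bad square is a bad square one of whose vertical sides is entirely covered. *)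

(* Defs.v *)
From HB Require Import structures.
From mathcomp Require Import all_boot all_order all_algebra.
From mathcomp Require Import all_classical all_reals.
From mathcomp Require Import ereal topology normedtype sequences measure lebesgue_measure.
Set Implicit Arguments. Unset Strict Implicit. Unset Printing Implicit Defensive.
Import Order.TTheory GRing.Theory Num.Theory.
Local Open Scope ring_scope.
Local Open Scope classical_set_scope.

Section Layouts.
Variable R : realType.

(* Squares are indexed by 1..n; x, y : nat -> R give the centres (x_i, y_i).
   prec i j means s_i ≺ s_j, i.e. s_j is in front of s_i. *)

Definition idx (n i : nat) : Prop := (1 <= i <= n)%N.

Definition strict_total_order (n : nat) (prec : nat -> nat -> Prop) : Prop :=
  [/\ (forall i, idx n i -> ~ prec i i),
      (forall i j l, idx n i -> idx n j -> idx n l -> prec i j -> prec j l -> prec i l)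
    & (forall i j, idx n i -> idx n j -> i <> j -> prec i j \/ prec j i)].

Definition layout (w : R) (n : nat) (x : nat -> R) (prec : nat -> nat -> Prop) : Prop :=
  (forall i, idx n i -> 1/2 <= x i <= w - 1/2) /\ strict_total_order n prec.

Definition in_sq (x y : nat -> R) (i : nat) (p : R * R) : Prop :=
  `|p.1 - x i| <= 1/2 /\ `|p.2 - y i| <= 1/2.

(* the four sides of s_i, parametrised by t in [0,1]:
   0 = bottom, 1 = right, 2 = top, 3 = left *)
Definition side_pt (x y : nat -> R) (i : nat) (s : 'I_4) (t : R) : R * R :=
  match val s with
  | 0 => (x i - 1/2 + t, y i - 1/2)
  | 1 => (x i + 1/2, y i - 1/2 + t)
  | 2 => (x i - 1/2 + t, y i + 1/2)
  | _ => (x i - 1/2, y i - 1/2 + t)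
  end.

Definition visible n (x y : nat -> R) (prec : nat -> nat -> Prop) (i : nat) (p : R * R) : Prop :=
  forall j, idx n j -> j <> i -> in_sq x y j p -> prec j i.

Definition covered n (x y : nat -> R) (prec : nat -> nat -> Prop) (i : nat) (p : R * R) : Prop :=
  ~ visible n x y prec i p.

Definition visible_side_length n (x y : nat -> R) (prec : nat -> nat -> Prop)
    (i : nat) (s : 'I_4) : \bar R :=
  (@lebesgue_measure R) [set t : R | 0 <= t <= 1 /\ visible n x y prec i (side_pt x y i s t)].

Definition visible_perimeter n (x y : nat -> R) (prec : nat -> nat -> Prop) (i : nat) : \bar R :=
  (\sum_(s < 4) visible_side_length n x y prec i s)%E.

Definition gap_sq n (x y : nat -> R) (prec : nat -> nat -> Prop) (i : nat) : \bar R :=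
  (visible_perimeter n x y prec i - 2%:E)%E.

(* the gap of the layout (minimum of the gaps) is larger than eps *)
Definition reasonable (eps : R) n (x y : nat -> R) (prec : nat -> nat -> Prop) : Prop :=
  forall i, idx n i -> (eps%:E < gap_sq n x y prec i)%E.

Definition corner (x y : nat -> R) (i : nat) (c : 'I_4) : R * R :=
  match val c with
  | 0 => (x i - 1/2, y i - 1/2)
  | 1 => (x i + 1/2, y i - 1/2)
  | 2 => (x i + 1/2, y i + 1/2)
  | _ => (x i - 1/2, y i + 1/2)
  end.

Definition bad_square n (x y : nat -> R) (prec : nat -> nat -> Prop) (i : nat) : Prop :=
  exists c1 c2 : 'I_4, c1 <> c2 /\
    covered n x y prec i (corner x y i c1) /\ covered n x y prec i (corner x y i c2).

Definition standard_bad_square n (x y : nat -> R) (prec : nat -> nat -> Prop) (i : nat) : Prop :=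
  bad_square n x y prec i /\
  ((forall t, 0 <= t <= 1 -> covered n x y prec i (x i - 1/2, y i - 1/2 + t)) \/
   (forall t, 0 <= t <= 1 -> covered n x y prec i (x i + 1/2, y i - 1/2 + t))).

End Layouts.

(* Main.v *)
Require Import Defs.
From HB Require Import structures.
From mathcomp Require Import all_boot all_order all_algebra.
From mathcomp Require Import all_classical all_reals.
From mathcomp Require Import ereal topology normedtype sequences measure lebesgue_measure.
From mathcomp Require Import lra zify.
Import Order.TTheory GRing.Theory Num.Theory.
Local Open Scope ring_scope.

Lemma in_sqE (R : realType) (x y : nat -> R) j (p : R * R) :
  in_sq x y j p <-> [/\ -(1/2) <= p.1 - x j, p.1 - x j <= 1/2,
                        -(1/2) <= p.2 - y j & p.2 - y j <= 1/2].
Proof.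
rewrite /in_sq !ler_norml; split.
  by case=> /andP[? ?] /andP[? ?].
by case=> ? ? ? ?; split; apply/andP.
Qed.

Lemma vsl_le (R : realType) n (x y : nat -> R) prec i s (c d : R) : c <= d ->
  (forall t, 0 <= t <= 1 -> visible n x y prec i (side_pt x y i s t) -> c <= t <= d) ->
  (visible_side_length n x y prec i s <= (d - c)%:E)%E.
Proof.
move=> cd H; rewrite /visible_side_length.
apply: (@le_trans _ _ ((@lebesgue_measure R) `[c, d]%classic)).
  rewrite /lebesgue_measure /lebesgue_stieltjes_measure /measure_extension.
  apply: le_mu_ext => t /= [Ht Hv]; rewrite in_itv /=; exact: H.
rewrite lebesgue_measure_itv /= lte_fin.
case: ltP => [_|]; first by rewrite EFinB.
by move=> _; rewrite lee_fin subr_ge0.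
Qed.

Lemma vis_nin (R : realType) n (x y : nat -> R) prec i j p :
  visible n x y prec i p -> idx n j -> j <> i -> ~ prec j i -> ~ in_sq x y j p.
Proof. by move=> V Ij ji nP H; apply: nP; apply: V. Qed.

Lemma cov_in (R : realType) n (x y : nat -> R) prec i j p :
  idx n j -> j <> i -> ~ prec j i -> in_sq x y j p -> covered n x y prec i p.
Proof. by move=> Ij ji nP H V; apply: nP; apply: V. Qed.

Arguments cov_in {R n x y prec i j p}.
Arguments vis_nin {R n x y prec i j p}.

Theorem lemma11 (R : realType) (w h : R) (k n : nat) (y x : nat -> R)
    (prec : nat -> nat -> Prop) (i : nat) :
  1 < w <= 2 -> 1 < h -> (2 <= k)%N ->
  1/2 <= y 1%N -> y n <= h - 1/2 ->
  (forall j, (1 <= j < n)%N -> y j.+1 - y j = 1 / k%:R) ->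
  layout w n x prec ->
  reasonable (1 / k%:R) n x y prec ->
  (1 < i < n)%N -> prec i i.-1 -> prec i i.+1 ->
  standard_bad_square n x y prec i.
Proof.
move=> /andP[w1 w2] _ k2 _ _ Hy [Hx [irr tr _]] Hr /andP[i1 iN] Pm Pp.
set e := 1 / k%:R in Hy Hr.
have e0 : 0 < e by rewrite /e divr_gt0 // ltr0n; lia.
have e2 : e <= 1/2.
  rewrite /e !div1r lef_pV2 ?posrE ?ltr0n ?ler_nat //; lia.
have Ii : idx n i by rewrite /idx; lia.
have Im : idx n i.-1 by rewrite /idx; lia.
have Ip : idx n i.+1 by rewrite /idx; lia.
have nm : i.-1 <> i by lia.
have np : i.+1 <> i by lia.
have nPm : ~ prec i.-1 i by move=> H; apply: (irr i Ii); apply: (tr _ _ _ Ii Im Ii).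
have nPp : ~ prec i.+1 i by move=> H; apply: (irr i Ii); apply: (tr _ _ _ Ii Ip Ii).
have yp : y i.+1 = y i + e by rewrite -(Hy i); [lra | lia].
have ym : y i.-1 = y i - e.
  have := Hy i.-1; rewrite prednK; last lia.
  by move=> H; rewrite -H; [lra | lia].
have /andP[xi1 xi2] := Hx i Ii.
have /andP[xm1 xm2] := Hx i.-1 Im.
have /andP[xp1 xp2] := Hx i.+1 Ip.
have Hg := Hr i Ii.
rewrite /gap_sq /visible_perimeter !big_ord_recr big_ord0 /= add0e in Hg.
case: (lerP (x i) (x i.-1)) => Ha; case: (lerP (x i) (x i.+1)) => Hb.
-
  have C : forall p : R * R, p.1 = x i + 1/2 -> y i - 1/2 <= p.2 <= y i + 1/2 ->
      covered n x y prec i p.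
    move=> [p1 p2] /= -> /andP[q1 q2].
    case: (lerP p2 (y i + 1/2 - e)) => q3.
      apply: (cov_in Im nm nPm); apply/in_sqE => /=; rewrite ym; split; lra.
    apply: (cov_in Ip np nPp); apply/in_sqE => /=; rewrite yp; split; lra.
  split.
    exists (@Ordinal 4 1 isT), (@Ordinal 4 2 isT); split; first by move/(congr1 val).
    by split; apply: C => /=; [lra | apply/andP; split; lra | lra | apply/andP; split; lra].
  right => t /andP[t0 t1]; apply: C => //=; apply/andP; split; lra.
-
  exfalso.
  have Hle : (visible_side_length n x y prec i (@Ordinal 4 0 isT) +
             visible_side_length n x y prec i (@Ordinal 4 1 isT) +
             visible_side_length n x y prec i (@Ordinal 4 2 isT) +
             visible_side_length n x y prec i (@Ordinal 4 3 isT) <=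
             ((x i.-1 - x i - 0)%:E + (1 - (1 - e))%:E + (1 - (1 + (x i.+1 - x i)))%:E
              + (e - 0)%:E))%E.
    apply: leeD; [apply: leeD; [apply: leeD|]|].
    + apply: vsl_le; first lra.
      move=> t /andP[t0 t1] V; have N := vis_nin V Im nm nPm.
      apply/andP; split; first lra.
      rewrite leNgt; apply/negP => Hlt; apply: N; apply/in_sqE => /=; rewrite ym; split; lra.
    + apply: vsl_le; first lra.
      move=> t /andP[t0 t1] V; have N := vis_nin V Im nm nPm.
      apply/andP; split; last lra.
      rewrite leNgt; apply/negP => Hlt; apply: N; apply/in_sqE => /=; rewrite ym; split; lra.
    + apply: vsl_le; first lra.
      move=> t /andP[t0 t1] V; have N := vis_nin V Ip np nPp.
      apply/andP; split; last lra.
      rewrite leNgt; apply/negP => Hlt; apply: N; apply/in_sqE => /=; rewrite yp; split; lra.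
    + apply: vsl_le; first lra.
      move=> t /andP[t0 t1] V; have N := vis_nin V Ip np nPp.
      apply/andP; split; first lra.
      rewrite leNgt; apply/negP => Hlt; apply: N; apply/in_sqE => /=; rewrite yp; split; lra.
  have := lt_le_trans Hg (leeB Hle (lexx 2%:E)).
  rewrite -!EFinD lte_fin; lra.
-
  exfalso.
  have Hle : (visible_side_length n x y prec i (@Ordinal 4 0 isT) +
             visible_side_length n x y prec i (@Ordinal 4 1 isT) +
             visible_side_length n x y prec i (@Ordinal 4 2 isT) +
             visible_side_length n x y prec i (@Ordinal 4 3 isT) <=
             ((1 - (1 + (x i.-1 - x i)))%:E + (e - 0)%:E + (x i.+1 - x i - 0)%:E
              + (1 - (1 - e))%:E))%E.
    apply: leeD; [apply: leeD; [apply: leeD|]|].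
    + apply: vsl_le; first lra.
      move=> t /andP[t0 t1] V; have N := vis_nin V Im nm nPm.
      apply/andP; split; last lra.
      rewrite leNgt; apply/negP => Hlt; apply: N; apply/in_sqE => /=; rewrite ym; split; lra.
    + apply: vsl_le; first lra.
      move=> t /andP[t0 t1] V; have N := vis_nin V Ip np nPp.
      apply/andP; split; first lra.
      rewrite leNgt; apply/negP => Hlt; apply: N; apply/in_sqE => /=; rewrite yp; split; lra.
    + apply: vsl_le; first lra.
      move=> t /andP[t0 t1] V; have N := vis_nin V Ip np nPp.
      apply/andP; split; first lra.
      rewrite leNgt; apply/negP => Hlt; apply: N; apply/in_sqE => /=; rewrite yp; split; lra.
    + apply: vsl_le; first lra.
      move=> t /andP[t0 t1] V; have N := vis_nin V Im nm nPm.
      apply/andP; split; last lra.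
      rewrite leNgt; apply/negP => Hlt; apply: N; apply/in_sqE => /=; rewrite ym; split; lra.
  have := lt_le_trans Hg (leeB Hle (lexx 2%:E)).
  rewrite -!EFinD lte_fin; lra.
-
  have C : forall p : R * R, p.1 = x i - 1/2 -> y i - 1/2 <= p.2 <= y i + 1/2 ->
      covered n x y prec i p.
    move=> [p1 p2] /= -> /andP[q1 q2].
    case: (lerP p2 (y i + 1/2 - e)) => q3.
      apply: (cov_in Im nm nPm); apply/in_sqE => /=; rewrite ym; split; lra.
    apply: (cov_in Ip np nPp); apply/in_sqE => /=; rewrite yp; split; lra.
  split.
    exists (@Ordinal 4 0 isT), (@Ordinal 4 3 isT); split; first by move/(congr1 val).
    by split; apply: C => /=; [lra | apply/andP; split; lra | lra | apply/andP; split; lra].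
  left => t /andP[t0 t1]; apply: C => //=; apply/andP; split; lra.
Qed.
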